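(* Let $e^m_1,e^m_2,e^m_3$ and $e^g_1,e^g_2,e^g_3$ be Bernoulli random variables on a common probability space. For $i\in\{1,2,3\}$, $e^m_i$ indicates that sub-system $i$ makes a safety-critical miss and $e^g_i$ indicates that it makes a safety-critical ghost. Let $e^m$ be the event that at least two of $e^m_1,e^m_2,e^m_3$ occur, and let $e^g$ be the event that at least two of $e^g_1,e^g_2,e^g_3$ occur. These are the miss and ghost events of the majority-vote fusion system. Let $c>0$ and $p\ge 0$. Assume: - for every pair $i\neq j$, the variables $e^m_i,e^m_j$ are one-sided $c$-approximate independent, and so are $e^g_i,e^g_j$; - for every $i$, $\Pr[e^m_i]\le p$ and $\Pr[e^g_i]\le p$. Then \[ \Pr[e^m \lor e^g] \le 6\,c\,p^2 . \]
   Context: Two Bernoulli random variables $r_1,r_2$ are called one-sided $c$-approximate independent if $\Pr[r_1 \land r_2] \le c\,\Pr[r_1]\,\Pr[r_2]$. *)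

(* Defs.v *)
From HB Require Import structures.
From mathcomp Require Import all_boot all_order all_algebra.
From mathcomp Require Import all_classical all_reals all_analysis.
Set Implicit Arguments. Unset Strict Implicit. Unset Printing Implicit Defensive.
Import Order.TTheory GRing.Theory Num.Theory.
Local Open Scope classical_set_scope.
Local Open Scope ring_scope.

(* A Bernoulli random variable on (T, P) is identified with the measurable
   event on which it takes value 1. *)

Definition one_sided_approx_indep d (T : measurableType d) (R : realType)
  (P : probability T R) (c : R) (A B : set T) : Prop :=
  (P (A `&` B) <= c%:E * P A * P B)%E.

Definition at_least_two_of_three (T : Type) (A : 'I_3 -> set T) : set T :=
  [set x | (2 <= #|[set i : 'I_3 | `[< A i x >]]|)%N].

(* Main.v *)
Require Import Defs.
From HB Require Import structures.
From mathcomp Require Import all_boot all_order all_algebra.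
From mathcomp Require Import all_classical all_reals all_analysis.
From mathcomp Require Import ring.
Import Order.TTheory GRing.Theory Num.Theory.
Local Open Scope classical_set_scope.
Local Open Scope ring_scope.

Definition pairs3 (T : Type) (A : 'I_3 -> set T) : set T :=
  (A ord0 `&` A (inord 1)) `|` (A ord0 `&` A (inord 2)) `|` (A (inord 1) `&` A (inord 2)).

Arguments pairs3 {T}.

Lemma two_sub (T : Type) (A : 'I_3 -> set T) :
  at_least_two_of_three A `<=` pairs3 A.
Proof.
move=> x; rewrite /at_least_two_of_three /pairs3 /=.
rewrite -sum1_card big_mkcond /= !big_ord_recr big_ord0 /=.
have -> : (widen_ord (leqnSn 2) (widen_ord (leqnSn 1) ord_max)) = (ord0 : 'I_3)
  by apply: val_inj.
have -> : (widen_ord (leqnSn 2) ord_max) = (inord 1 : 'I_3)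
  by apply: val_inj; rewrite /= inordK.
have -> : (ord_max : 'I_3) = (inord 2 : 'I_3)
  by apply: val_inj; rewrite /= inordK.
set S := [set i : 'I_3 | `[< A i x >]].
have h i : (i \in S) -> A i x by rewrite in_setE /S /= => /asboolP.
case E0: (ord0 \in S); case E1: (inord 1 \in S); case E2: (inord 2 \in S) => //= _.
- by left; left; split; apply: h.
- by left; left; split; apply: h.
- by left; right; split; apply: h.
- by right; split; apply: h.
Qed.

Lemma two_eq (T : Type) (A : 'I_3 -> set T) :
  at_least_two_of_three A = pairs3 A.
Proof.
apply/seteqP; split; first exact: two_sub.
move=> x; rewrite /at_least_two_of_three /pairs3 /=.
rewrite -sum1_card big_mkcond /= !big_ord_recr big_ord0 /=.
have -> : (widen_ord (leqnSn 2) (widen_ord (leqnSn 1) ord_max)) = (ord0 : 'I_3)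
  by apply: val_inj.
have -> : (widen_ord (leqnSn 2) ord_max) = (inord 1 : 'I_3)
  by apply: val_inj; rewrite /= inordK.
have -> : (ord_max : 'I_3) = (inord 2 : 'I_3)
  by apply: val_inj; rewrite /= inordK.
set S := [set i : 'I_3 | `[< A i x >]].
have h i : A i x -> (i \in S) by move=> a; rewrite in_setE /S /=; apply/asboolP.
case=> [[[a b]|[a b]]|[a b]]; rewrite (h _ a) (h _ b) //=; by case: (_ \in S).
Qed.

Lemma pair_bound d (T : measurableType d) (R : realType)
  (P : probability T R) (A B : set T) (c p : R) :
  0 < c -> one_sided_approx_indep P c A B ->
  (P A <= p%:E)%E -> (P B <= p%:E)%E -> (P (A `&` B) <= (c * p * p)%:E)%E.
Proof.
move=> c0 H hA hB; apply: (le_trans H).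
rewrite !EFinM; apply: lee_pmul => //.
- by rewrite mule_ge0 // lee_fin ltW.
- by apply: lee_pmul => //; rewrite lee_fin ltW.
Qed.

Lemma three_bound d (T : measurableType d) (R : realType)
  (P : probability T R) (A : 'I_3 -> set T) (c p : R) :
  (forall i, measurable (A i)) -> 0 < c ->
  (forall i j : 'I_3, i != j -> one_sided_approx_indep P c (A i) (A j)) ->
  (forall i, (P (A i) <= p%:E)%E) ->
  (P (at_least_two_of_three A) <= (3 * c * p ^+ 2)%:E)%E.
Proof.
move=> mA c0 ind hp.
have mp : measurable (pairs3 A).
  by rewrite /pairs3; apply: measurableU; [apply: measurableU|]; apply: measurableI.
have ne01 : (ord0 : 'I_3) != inord 1 by apply/eqP => /(f_equal val); rewrite /= inordK.
have ne02 : (ord0 : 'I_3) != inord 2 by apply/eqP => /(f_equal val); rewrite /= inordK.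
have ne12 : (inord 1 : 'I_3) != inord 2
  by apply/eqP => /(f_equal val); rewrite /= !inordK.
rewrite two_eq /pairs3.
apply: (le_trans (measureU2 _ _ _)); [|exact: measurableI|].
  by apply: measurableU; apply: measurableI.
apply: (le_trans (leeD (measureU2 _ _ _) (lexx _))); try exact: measurableI.
have -> : (3 * c * p ^+ 2) = c * p * p + c * p * p + c * p * p by rewrite expr2; ring.
rewrite !EFinD; apply: leeD; [apply: leeD|]; apply: pair_bound => //; apply: ind => //.
Qed.

Theorem corollary3 (d : measure_display) (T : measurableType d) (R : realType)
  (P : probability T R) (em eg : 'I_3 -> set T) (c p : R) :
  (forall i, measurable (em i)) -> (forall i, measurable (eg i)) ->
  0 < c -> 0 <= p ->
  (forall i j : 'I_3, i != j -> one_sided_approx_indep P c (em i) (em j)) ->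
  (forall i j : 'I_3, i != j -> one_sided_approx_indep P c (eg i) (eg j)) ->
  (forall i, (P (em i) <= p%:E)%E) -> (forall i, (P (eg i) <= p%:E)%E) ->
  (P (at_least_two_of_three em `|` at_least_two_of_three eg)
     <= (6 * c * p ^+ 2)%:E)%E.
Proof.
move=> mm mg c0 p0 im ig pm pg.
have meas A : (forall i, measurable (A i)) -> measurable (@at_least_two_of_three T A).
  move=> mA; rewrite two_eq.
  by rewrite /pairs3; apply: measurableU; [apply: measurableU|]; apply: measurableI.
apply: (le_trans (measureU2 _ (meas _ mm) (meas _ mg))).
have -> : 6 * c * p ^+ 2 = 3 * c * p ^+ 2 + 3 * c * p ^+ 2 by ring.
by rewrite EFinD; apply: leeD; apply: three_bound.
Qed.
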